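(* Let $X$ be an algebraic K3 surface of Picard number $9$ with an even set of eight disjoint smooth rational curves $N_1,\dots,N_8$, let $N\subseteq NS(X)$ be the minimal primitive sublattice containing them, let $L$ generate $N^\perp\subseteq NS(X)$ with $L^2=2d>0$, $L^2\equiv 0\pmod 4$, and suppose $NS(X)\neq \mathbb{Z}L\oplus N$, so that $NS(X)$ is generated by $\mathbb{Z}L\oplus N$ and a class $\frac{L+v}{2}$ with $v\in N$. Then: (i) if $L^2\equiv 4\pmod 8$, after renumbering the $N_i$ one can take $v=-N_1-N_2$, and then $\frac{L-N_3-\dots-N_8}{2}\in NS(X)$ as well; (ii) if $L^2\equiv 0\pmod 8$, after renumbering the $N_i$ one can take $v=-(N_1+N_2+N_3+N_4)$, and then $\frac{L-N_5-N_6-N_7-N_8}{2}\in NS(X)$ as well.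
   Context: All varieties are over $\mathbb{C}$. A set of disjoint smooth rational curves $N_1,\dots,N_m$ on a smooth surface $X$ is an even set if there is $\delta\in\mathrm{Pic}(X)$ with $N_1+\dots+N_m\sim 2\delta$. The minimal primitive sublattice of $NS(X)$ containing an even set of eight disjoint smooth rational curves on a K3 surface is the Nikulin lattice $N$, generated by $N_1,\dots,N_8$ and $\hat N=\frac12\sum N_i$, with $N_i\cdot N_j=-2\delta_{ij}$. *)

(* Defs.v *)
(* NS(X) is modelled abstractly as a free Z-module of rank 9
   (a zmodType with a Z-basis) carrying a symmetric Z-bilinear even form. *)
From mathcomp Require Import all_boot all_order all_algebra all_fingroup.
Set Implicit Arguments. Unset Strict Implicit. Unset Printing Implicit Defensive.
Import Order.TTheory GRing.Theory Num.Theory.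
Local Open Scope ring_scope.

Definition is_Zbasis (M : zmodType) (n : nat) (e : 'I_n -> M) : Prop :=
  (forall x : M, exists k : 'I_n -> int, x = \sum_(i < n) e i *~ k i) /\
  (forall k : 'I_n -> int, \sum_(i < n) e i *~ k i = 0 -> forall i, k i = 0).

Definition in_Zspan (M : zmodType) (n : nat) (f : 'I_n -> M) (x : M) : Prop :=
  exists k : 'I_n -> int, x = \sum_(i < n) f i *~ k i.

(* saturation of the span of the f i, i.e. the minimal primitive sublattice
   containing them *)
Definition sat_span (M : zmodType) (n : nat) (f : 'I_n -> M) (x : M) : Prop :=
  exists m : nat, (0 < m)%N /\ in_Zspan f (x *+ m).

Definition nikulin_span (M : zmodType) (Nc : 'I_8 -> M) (Nhat : M) (x : M) : Prop :=
  exists (k : 'I_8 -> int) (c : int), x = \sum_(i < 8) Nc i *~ k i + Nhat *~ c.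

Definition perp (M : zmodType) (b : M -> M -> int) (P : M -> Prop) (x : M) : Prop :=
  forall y, P y -> b x y = 0.

Definition generated_with_half (M : zmodType) (P : M -> Prop) (L v : M) : Prop :=
  exists w : M, w *+ 2 = L + v /\
    forall x : M, exists (k c : int) (n : M), P n /\ x = L *~ k + n + w *~ c.

Definition generated_by (M : zmodType) (P : M -> Prop) (L : M) : Prop :=
  forall x : M, exists (k : int) (n : M), P n /\ x = L *~ k + n.

(* Main.v *)
Require Import Defs.
From mathcomp Require Import all_boot all_order all_algebra all_fingroup.
From mathcomp Require Import zify ring.
Import Order.TTheory GRing.Theory Num.Theory.

Lemma perm_front (n : nat) (A : {set 'I_n}) :
  exists s : 'S_n, forall i, (s i \in A) = (i < #|A|)%N.
Proof.
set l1 := [seq x <- enum 'I_n | x \in A].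
set l2 := [seq x <- enum 'I_n | x \notin A].
have hp : perm_eq (l1 ++ l2) (ord_tuple n).
  by rewrite val_ord_tuple perm_filterC.
case/tuple_permP: (hp) => p Hl; exists p => i.
have := congr1 (fun s => nth i s i) Hl => /=.
rewrite (nth_map i) ?size_enum_ord // nth_ord_enum tnth_ord_tuple => <-.
have s1 : size l1 = #|A|.
  by rewrite cardE /enum_mem /l1 enumT.
have s12 : size l1 + size l2 = n.
  by rewrite -size_cat (perm_size hp) size_tuple.
rewrite nth_cat s1; case: ifP => hi.
  have : nth i l1 i \in l1 by rewrite mem_nth // s1.
  by rewrite mem_filter => /andP[].
have : nth i l2 (i - #|A|) \in l2.
  apply: mem_nth; move: (ltn_ord i) hi s12 s1 => hn /negbT; rewrite -leqNgt; clearbody l1 l2; move: hn; move: (#|A|) (size l1) (size l2) (nat_of_ord i) => a b c k h1 h2 h3 h4; lia.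
by rewrite mem_filter => /andP[/negbTE].
Qed.

Local Open Scope ring_scope.

Lemma sum_lt2 (M : zmodType) (F : 'I_8 -> M) :
  \sum_(i < 8 | (i < 2)%N) F i = F (inord 0) + F (inord 1).
Proof.
rewrite big_mkcond !big_ord_recl big_ord0 /= !addr0.
by congr (F _ + F _); apply/val_inj; rewrite /= inordK.
Qed.

Section Add.
Variables (M : zmodType) (f : M -> int).
Hypothesis hf : forall x y, f (x + y) = f x + f y.

Lemma addf0 : f 0 = 0.
Proof. have := hf 0 0; rewrite addr0; lia. Qed.

Lemma addfN x : f (- x) = - f x.
Proof. have := hf x (- x); rewrite subrr addf0; lia. Qed.

Lemma addfMn x n : f (x *+ n) = f x * n%:Z.
Proof.
elim: n => [|n IH]; first by rewrite mulr0n addf0 mulr0.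
by rewrite mulrS hf IH; lia.
Qed.

Lemma addfMz x m : f (x *~ m) = f x * m.
Proof.
case: m => n; first by rewrite -pmulrn addfMn.
by rewrite NegzE mulrNz addfN -pmulrn addfMn mulrN.
Qed.

Lemma addf_sum (I : finType) (P : pred I) (F : I -> M) :
  f (\sum_(i | P i) F i) = \sum_(i | P i) f (F i).
Proof. exact: (big_morph f hf addf0). Qed.
End Add.

Lemma nik_add (M : zmodType) (Nc : 'I_8 -> M) Nhat a b :
  nikulin_span Nc Nhat a -> nikulin_span Nc Nhat b -> nikulin_span Nc Nhat (a + b).
Proof.
move=> [k1 [c1 ->]] [k2 [c2 ->]]; exists (fun i => k1 i + k2 i), (c1 + c2).
rewrite mulrzDr.
have -> : \sum_(i < 8) Nc i *~ (k1 i + k2 i) = \sum_(i < 8) Nc i *~ k1 i + \sum_(i < 8) Nc i *~ k2 i.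
  by rewrite -big_split; apply: eq_bigr => i _; rewrite mulrzDr.
by rewrite addrACA.
Qed.

Lemma nik_mulz (M : zmodType) (Nc : 'I_8 -> M) Nhat a m :
  nikulin_span Nc Nhat a -> nikulin_span Nc Nhat (a *~ m).
Proof.
move=> [k [c ->]]; exists (fun i => k i * m), (c * m).
rewrite mulrzDl mulrzA mulrz_suml; congr (_ + _).
by apply: eq_bigr => i _; rewrite mulrzA.
Qed.

Theorem corollary3p4
  (NS : zmodType) (b : NS -> NS -> int)
  (hb_add : forall x y z : NS, b (x + y) z = b x z + b y z)
  (hb_sym : forall x y : NS, b x y = b y x)
  (heven : forall x : NS, (2 %| b x x)%Z)
  (hrank : exists e : 'I_9 -> NS, is_Zbasis e)
  (Nc : 'I_8 -> NS)
  (hN : forall i j : 'I_8, b (Nc i) (Nc j) = if i == j then -2 else 0)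
  (Nhat : NS) (hNhat : Nhat *+ 2 = \sum_(i < 8) Nc i)
  (hnik : forall x : NS, sat_span Nc x <-> nikulin_span Nc Nhat x)
  (L : NS) (d : int)
  (hL : forall x : NS, perp b (sat_span Nc) x <-> exists k : int, x = L *~ k)
  (hL2 : b L L = 2 * d) (hd : 0 < d) (hL4 : (4 %| b L L)%Z)
  (hne : ~ generated_by (sat_span Nc) L)
  (hgen : exists v : NS, sat_span Nc v /\ generated_with_half (sat_span Nc) L v) :
  ((b L L %% 8)%Z = 4 ->
     exists s : 'S_8,
       generated_with_half (sat_span Nc) L (- (Nc (s (inord 0)) + Nc (s (inord 1))))
       /\ exists w : NS, w *+ 2 = L - \sum_(i < 8 | (2 <= i)%N) Nc (s i))
  /\
  ((b L L %% 8)%Z = 0 ->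
     exists s : 'S_8,
       generated_with_half (sat_span Nc) L (- \sum_(i < 8 | (i < 4)%N) Nc (s i))
       /\ exists w : NS, w *+ 2 = L - \sum_(i < 8 | (4 <= i)%N) Nc (s i)).
Proof.
have bl z : forall x y, b (x + y) z = b x z + b y z by move=> x y; apply: hb_add.
have bMz x y m : b (x *~ m) y = b x y * m := @addfMz _ (fun u => b u y) (bl y) x m.
have bsum (P : pred 'I_8) (F : 'I_8 -> NS) y :
    b (\sum_(i | P i) F i) y = \sum_(i | P i) b (F i) y := @addf_sum _ (fun u => b u y) (bl y) _ P F.
have hP j : sat_span Nc (Nc j).
  apply/hnik; exists (fun i => if i == j then 1 else 0), 0.
  rewrite mulr0z addr0 (bigD1 j) //= eqxx mulr1z big1 ?addr0 // => i /negbTE ->.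
  by rewrite mulr0z.
have LP y : sat_span Nc y -> b L y = 0.
  by apply: ((hL L).2 (ex_intro _ 1 (esym (mulr1z L)))).
have delta (j : 'I_8) (a : 'I_8 -> int) :
    \sum_(i < 8) (if i == j then -2 else 0) * a i = - 2 * a j.
  by rewrite (bigD1 j) //= eqxx big1 ?addr0 // => i /negbTE ->; rewrite mul0r.
have bNhat j : b Nhat (Nc j) = -1.
  have : b (Nhat *+ 2) (Nc j) = -2.
    rewrite hNhat bsum (eq_bigr (fun i => (if i == j then -2 else 0) * 1)).
      by rewrite delta.
    by move=> i _; rewrite hN mulr1.
  by rewrite pmulrn bMz; lia.
case: hgen => v [Pv [w [hw hgx]]].
case/hnik: (Pv) => k [c hv].
have bvN j : b v (Nc j) = -2 * k j - c.
  rewrite hv bl bsum bMz bNhat.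
  rewrite (eq_bigr (fun i => (if i == j then -2 else 0) * k i)) => [|i _].
    by rewrite delta; lia.
  by rewrite bMz hN mulrC.
set c' := - (b w (Nc ord0) + k ord0).
have hc : c = c' * 2.
  have := LP _ (hP ord0); have := bvN ord0.
  have : b (w *+ 2) (Nc ord0) = b w (Nc ord0) * 2 by rewrite pmulrn bMz.
  rewrite hw bl /c'; lia.
pose x i := k i + c'.
have hv2 : v = \sum_i Nc i *~ x i.
  have e2 : Nhat *~ 2 = Nhat *+ 2 by rewrite -mulrz_nat.
  rewrite hv hc mulrC mulrzA e2 hNhat mulrz_suml -big_split /=.
  by apply: eq_bigr => i _; rewrite mulrzDr.
have bvN2 j : b v (Nc j) = -2 * x j by rewrite bvN hc /x; lia.
have bvv : b v v = -2 * \sum_j x j ^+ 2.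
  rewrite {2}hv2 hb_sym bsum mulr_sumr; apply: eq_bigr => j _.
  by rewrite bMz hb_sym bvN2 expr2 mulrA.
have bLv : b L v = 0 := LP v Pv.
have key : b w w * 4 = b L L + b v v.
  have : b (w *+ 2) (w *+ 2) = b w w * 4.
    rewrite pmulrn bMz (hb_sym w) bMz; lia.
  rewrite hw !bl (hb_sym L) (hb_sym v) !bl (hb_sym v L) bLv; lia.
pose q j := (x j %/ 2)%Z.
pose p j := (x j %% 2)%Z.
set S := [set j | p j == 1].
have hp j : p j = (if j \in S then 1 else 0).
  rewrite /p inE /p; case: eqP => //; lia.
have hx j : x j = q j * 2 + p j by rewrite /q /p; lia.
have sumx : \sum_j x j ^+ 2 = (\sum_j (q j ^+ 2 + q j * p j)) * 4 + #|S|%:Z.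
  have e j : x j ^+ 2 = (q j ^+ 2 + q j * p j) * 4 + (if j \in S then 1 else 0).
    by rewrite hx hp; case: (j \in S); ring.
  rewrite (eq_bigr _ (fun j _ => e j)) big_split /= -mulr_suml; congr (_ + _).
  by rewrite -big_mkcond /= sumr_const natz.
have cardS : (#|S| <= 8)%N by have := max_card S; rewrite card_ord.
have cardSC : (#|S| + #|~: S| = 8)%N by rewrite cardsC card_ord.
have hev := heven w.
set Q := \sum_j (q j ^+ 2 + q j * p j).
set X2 := \sum_j x j ^+ 2.
have zA : forall A, A = S \/ A = ~: S -> exists z, z *+ 2 = L - \sum_(i in A) Nc i
    /\ nikulin_span Nc Nhat (w - z).
  have hS : exists z, z *+ 2 = L - \sum_(i in S) Nc i
      /\ nikulin_span Nc Nhat (w - z).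
    exists (w - \sum_i Nc i *~ (q i + p i)); split.
      rewrite mulrnBl hw hv2 -sumrMnl -addrA; congr (L + _).
      rewrite -sumrB -sumrN [RHS]big_mkcond; apply: eq_bigr => i _.
      rewrite pmulrn -mulrzA -mulrzBr.
      have -> : x i - (q i + p i) * 2%:Z = - (if i \in S then 1 else 0).
        by have := hx i; have := hp i; case: (i \in S); lia.
      by case: (i \in S); rewrite ?mulrN1z // oppr0 mulr0z oppr0.
    have -> : forall s, w - (w - s) = s by move=> s; rewrite opprB addrC subrK.
    by exists (fun i => q i + p i), 0; rewrite mulr0z addr0.
  case: hS => z [hz nz].
  move=> A [->|->]; first by exists z.
  exists (z + \sum_(i in S) Nc i - Nhat); split.
    rewrite mulrnBl mulrnDl hz hNhat [\sum_(i < 8) Nc i](bigID (mem S)) /=.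
    rewrite [\sum_(i in ~: S) Nc i](eq_bigl (fun i => i \notin S)) => [|i]; last by rewrite in_setC.
    by rewrite mulr2n opprD !addrA subrK addrK.
  have -> : w - (z + \sum_(i in S) Nc i - Nhat)
      = (w - z) + (\sum_(i in S) Nc i) *~ (-1) + Nhat.
    by rewrite mulrN1z !opprD opprK !addrA.
  apply: nik_add; first apply: nik_add => //.
    apply: nik_mulz; exists (fun i => if i \in S then 1 else 0), 0.
    rewrite mulr0z addr0 big_mkcond; apply: eq_bigr => i _.
    by case: (i \in S); rewrite ?mulr1z ?mulr0z.
  exists (fun i => 0), 1; rewrite mulr1z big1 ?add0r // => i _; by rewrite mulr0z.
have fin : forall A, A = S \/ A = ~: S -> exists s : 'S_8,
    generated_with_half (sat_span Nc) L (- \sum_(i < 8 | (i < #|A|)%N) Nc (s i))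
    /\ exists w, w *+ 2 = L - \sum_(i < 8 | (#|A| <= i)%N) Nc (s i).
  move=> A hA; have [s hs] := @perm_front 8 A.
  have e1 : \sum_(i < 8 | (i < #|A|)%N) Nc (s i) = \sum_(i in A) Nc i.
    rewrite [RHS](reindex_inj (@perm_inj _ s)) /=.
    by apply: eq_bigl => i; rewrite hs.
  have e2 : \sum_(i < 8 | (#|A| <= i)%N) Nc (s i) = \sum_(i in ~: A) Nc i.
    rewrite [RHS](reindex_inj (@perm_inj _ s)) /=.
    by apply: eq_bigl => i; rewrite in_setC hs -leqNgt.
  exists s; rewrite e1 e2; split.
    have [z [hz nz]] := zA A hA.
    exists z; split; first by rewrite hz.
    move=> y; have [k0 [c0 [n [Pn ->]]]] := hgx y.
    exists k0, c0, (n + (w - z) *~ c0); split.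
      by apply/hnik; apply: nik_add; [apply/hnik | apply: nik_mulz].
    by rewrite mulrzBl !addrA subrK.
  have hA' : ~: A = S \/ ~: A = ~: S.
    by case: hA => ->; [right | left; rewrite setCK].
  by have [z [hz _]] := zA _ hA'; exists z.
have contra : forall u, u *+ 2 = L -> False.
  move=> u hu.
  have up : perp b (sat_span Nc) u.
    move=> y Py; have := LP y Py; rewrite -hu pmulrn bMz; lia.
  case/hL: up => m hm.
  have : b L L = b L L * (m * 2).
    by rewrite -{1}hu hm pmulrn -mulrzA bMz.
  rewrite hL2 => e; have : d * (m * 2 - 1) = 0 by rewrite mulrBr mulr1; lia.
  move/eqP; rewrite mulf_eq0 => /orP[/eqP|/eqP]; lia.
split => h8.
  have : (#|S| = 2 \/ #|S| = 6)%N.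
    move: key; rewrite bvv sumx; move: hev h8 hL2 cardS; lia.
  case=> hc2.
    have [s [h1 h2]] := fin S (or_introl erefl).
    by exists s; rewrite hc2 sum_lt2 in h1; rewrite hc2 in h2; split.
  have hc2' : #|~: S| = 2%N by lia.
  have [s [h1 h2]] := fin (~: S) (or_intror erefl).
  by exists s; rewrite hc2' sum_lt2 in h1; rewrite hc2' in h2; split.
have : (#|S| = 0 \/ #|S| = 4 \/ #|S| = 8)%N.
  move: key; rewrite bvv sumx; move: hev h8 hL2 cardS; lia.
case=> [hc0|[hc4|hc8]].
- exfalso; have [z [hz _]] := zA S (or_introl erefl).
  move/eqP: hc0; rewrite cards_eq0 => /eqP hS0.
  by apply: (contra z); rewrite hz hS0 big_set0 subr0.
- have [s [h1 h2]] := fin S (or_introl erefl).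
  by exists s; rewrite hc4 in h1 h2; split.
- exfalso; have [z [hz _]] := zA (~: S) (or_intror erefl).
  have : #|~: S| == 0%N by apply/eqP; lia.
  rewrite cards_eq0 => /eqP hS0.
  by apply: (contra z); rewrite hz hS0 big_set0 subr0.
Qed.
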